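(* Let $\alpha,\beta,\gamma,\delta,\epsilon,\mu$ be parameters and let $$A_0=\begin{pmatrix}\alpha&\beta&\gamma\\\beta&\epsilon&\delta\\\gamma&\delta&\mu\end{pmatrix},\qquad A_1=\begin{pmatrix}\alpha_1&\beta_1&\gamma_1\\\beta_1&\epsilon_1&\delta_1\\\gamma_1&\delta_1&\mu_1\end{pmatrix},$$ with $\alpha_1=\alpha\epsilon-\beta^2$, $\beta_1=2\alpha\delta-2\beta\gamma$, $\gamma_1=\beta\delta-\gamma\epsilon$, $\epsilon_1=4\alpha\mu-4\gamma^2$, $\delta_1=2\beta\mu-2\gamma\delta$, $\mu_1=\epsilon\mu-\delta^2$. Put $\mathbf{X}=(x^2,x,1)^T$, $\mathbf{Y}=(y^2,y,1)^T$ and $I(x,y)=\dfrac{\mathbf{X}^TA_0\mathbf{Y}}{\mathbf{X}^TA_1\mathbf{Y}}$. Consider the maps $\Psi,\Psi_1:(x,y)\mapsto(\bar x,\bar y)$ given respectively by $$\Psi:\quad \bar x=y,\qquad \bar y=-\frac{2\gamma y^2+2\delta y+2\mu+x(\beta y^2+\epsilon y+\delta)}{\beta y^2+\epsilon y+\delta+2x(\alpha y^2+\beta y+\gamma)},$$ $$\Psi_1:\quad \bar x=y,\qquad \bar y=-\frac{2\gamma_1 y^2+2\delta_1 y+2\mu_1+x(\beta_1 y^2+\epsilon_1 y+\delta_1)}{\beta_1 y^2+\epsilon_1 y+\delta_1+2x(\alpha_1 y^2+\beta_1 y+\gamma_1)}.$$ Then both $\Psi$ and $\Psi_1$ preserve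 $I^2$ (i.e. $I(\bar x,\bar y)^2=I(x,y)^2$). Moreover $\Psi$ is anti measure-preserving and $\Psi_1$ is measure-preserving, both with density $m(x,y)=\left(\mathbf{X}^TA_0\mathbf{Y}\right)^{-1}$.
   Context: A map $(x,y)\mapsto(\bar x,\bar y)$ with Jacobian determinant $J=\det\frac{\partial(\bar x,\bar y)}{\partial(x,y)}$ is measure-preserving with density $m$ if $J=\dfrac{m(x,y)}{m(\bar x,\bar y)}$, and anti measure-preserving with density $m$ if $J=-\dfrac{m(x,y)}{m(\bar x,\bar y)}$. *)

(* Defs.v *)
From Stdlib Require Import Reals.
From Coquelicot Require Import Coquelicot.
Open Scope R_scope.

(* X^T A Y with X = (x^2,x,1)^T, Y = (y^2,y,1)^T and
   A = [[a,b,g],[b,e,d],[g,d,m]]  (a=alpha, b=beta, g=gamma, d=delta,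
   e=epsilon, m=mu), written out entrywise. *)
Definition formA0 (a b g d e m : R) (x y : R) : R :=
  x^2 * (a * y^2 + b * y + g) + x * (b * y^2 + e * y + d) + (g * y^2 + d * y + m).

Definition alpha1 (a b g d e m : R) := a * e - b^2.
Definition beta1 (a b g d e m : R) := 2 * a * d - 2 * b * g.
Definition gamma1 (a b g d e m : R) := b * d - g * e.
Definition eps1 (a b g d e m : R) := 4 * a * m - 4 * g^2.
Definition delta1 (a b g d e m : R) := 2 * b * m - 2 * g * d.
Definition mu1 (a b g d e m : R) := e * m - d^2.

Definition Iinv (a b g d e m : R) (x y : R) : R :=
  formA0 a b g d e m x y /
  formA0 (alpha1 a b g d e m) (beta1 a b g d e m) (gamma1 a b g d e m)
       (delta1 a b g d e m) (eps1 a b g d e m) (mu1 a b g d e m) x y.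

Definition map_den (a b g d e m : R) (x y : R) : R :=
  b * y^2 + e * y + d + 2 * x * (a * y^2 + b * y + g).
Definition map_x (a b g d e m : R) (x y : R) : R := y.
Definition map_y (a b g d e m : R) (x y : R) : R :=
  - ((2 * g * y^2 + 2 * d * y + 2 * m + x * (b * y^2 + e * y + d)) /
     map_den a b g d e m x y).

Definition Psi_x (a b g d e m : R) := map_x a b g d e m.
Definition Psi_y (a b g d e m : R) := map_y a b g d e m.
Definition Psi_den (a b g d e m : R) := map_den a b g d e m.
Definition Psi1_x (a b g d e m : R) :=
  map_x (alpha1 a b g d e m) (beta1 a b g d e m) (gamma1 a b g d e m)
        (delta1 a b g d e m) (eps1 a b g d e m) (mu1 a b g d e m).
Definition Psi1_y (a b g d e m : R) :=
  map_y (alpha1 a b g d e m) (beta1 a b g d e m) (gamma1 a b g d e m)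
        (delta1 a b g d e m) (eps1 a b g d e m) (mu1 a b g d e m).
Definition Psi1_den (a b g d e m : R) :=
  map_den (alpha1 a b g d e m) (beta1 a b g d e m) (gamma1 a b g d e m)
        (delta1 a b g d e m) (eps1 a b g d e m) (mu1 a b g d e m).

Definition partials_exist (f h : R -> R -> R) (x y : R) : Prop :=
  ex_derive (fun t => f t y) x /\ ex_derive (fun t => f x t) y /\
  ex_derive (fun t => h t y) x /\ ex_derive (fun t => h x t) y.

Definition jacobian (f h : R -> R -> R) (x y : R) : R :=
  Derive (fun t => f t y) x * Derive (fun t => h x t) y
  - Derive (fun t => f x t) y * Derive (fun t => h t y) x.

Definition measure_preserving_at (f h mdens : R -> R -> R) (x y : R) : Prop :=
  partials_exist f h x y /\
  jacobian f h x y = mdens x y / mdens (f x y) (h x y).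
Definition anti_measure_preserving_at (f h mdens : R -> R -> R) (x y : R) : Prop :=
  partials_exist f h x y /\
  jacobian f h x y = - (mdens x y / mdens (f x y) (h x y)).

Definition dens (a b g d e m : R) (x y : R) : R := / formA0 a b g d e m x y.

Definition formA1 (a b g d e m : R) :=
  formA0 (alpha1 a b g d e m) (beta1 a b g d e m) (gamma1 a b g d e m)
       (delta1 a b g d e m) (eps1 a b g d e m) (mu1 a b g d e m).

(* Main.v *)
Require Import Defs.
From Stdlib Require Import Reals Lra.
From Coquelicot Require Import Coquelicot.
Open Scope R_scope.

Definition dYx (a b g d e m x y : R) :=
  - ((b * y^2 + e * y + d) * map_den a b g d e m x y
     - (2 * g * y^2 + 2 * d * y + 2 * m + x * (b * y^2 + e * y + d)) * (2 * (a * y^2 + b * y + g)))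
    / (map_den a b g d e m x y)^2.

Lemma dY a b g d e m x y : map_den a b g d e m x y <> 0 ->
  is_derive (fun t => map_y a b g d e m t y) x (dYx a b g d e m x y).
Proof.
  intro H. unfold map_y, dYx. unfold map_den in *. auto_derive. exact H. field. exact H.
Qed.

Lemma jac a b g d e m x y : map_den a b g d e m x y <> 0 ->
  partials_exist (map_x a b g d e m) (map_y a b g d e m) x y /\
  jacobian (map_x a b g d e m) (map_y a b g d e m) x y = - dYx a b g d e m x y.
Proof.
  intro H. pose proof (dY _ _ _ _ _ _ x y H) as D.
  unfold partials_exist, jacobian, map_x. split.
  - split; [auto_derive; auto|]. split; [auto_derive; auto|]. split; [eexists; eassumption|].
    unfold map_y, map_den; unfold map_den in H; auto_derive; auto.
  - replace (Derive (fun t => map_y a b g d e m t y) x) with (dYx a b g d e m x y) by (symmetry; apply is_derive_unique; exact D).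
    replace (Derive (fun _ : R => y) x) with 0 by (symmetry; apply is_derive_unique; auto_derive; auto).
    replace (Derive (fun t : R => t) y) with 1 by (symmetry; apply is_derive_unique; auto_derive; auto).
    lra.
Qed.

Lemma key0 a b g d e m x y : map_den a b g d e m x y <> 0 ->
  - dYx a b g d e m x y * formA0 a b g d e m x y =
  - formA0 a b g d e m (map_x a b g d e m x y) (map_y a b g d e m x y).
Proof.
  intro H. unfold dYx, formA0, map_x, map_y. unfold map_den in *. field. exact H.
Qed.

Lemma key1 a b g d e m x y : Psi1_den a b g d e m x y <> 0 ->
  - dYx (alpha1 a b g d e m) (beta1 a b g d e m) (gamma1 a b g d e m)
       (delta1 a b g d e m) (eps1 a b g d e m) (mu1 a b g d e m) x y * formA0 a b g d e m x y =
  formA0 a b g d e m (Psi1_x a b g d e m x y) (Psi1_y a b g d e m x y).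
Proof.
  intro H. unfold Psi1_den, Psi1_x, Psi1_y, dYx, formA0, map_x, map_y in *.
  unfold map_den in *. unfold alpha1, beta1, gamma1, delta1, eps1, mu1 in *. field. exact H.
Qed.

Lemma inv0 a b g d e m x y : Psi_den a b g d e m x y <> 0 ->
  formA0 a b g d e m (Psi_x a b g d e m x y) (Psi_y a b g d e m x y) * formA1 a b g d e m x y
  + formA0 a b g d e m x y * formA1 a b g d e m (Psi_x a b g d e m x y) (Psi_y a b g d e m x y) = 0.
Proof.
  intro H. unfold Psi_den, Psi_x, Psi_y, formA1, formA0, map_x, map_y in *.
  unfold map_den in *. unfold alpha1, beta1, gamma1, delta1, eps1, mu1 in *. field. exact H.
Qed.

Lemma inv1 a b g d e m x y : Psi1_den a b g d e m x y <> 0 ->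
  formA0 a b g d e m (Psi1_x a b g d e m x y) (Psi1_y a b g d e m x y) * formA1 a b g d e m x y
  + formA0 a b g d e m x y * formA1 a b g d e m (Psi1_x a b g d e m x y) (Psi1_y a b g d e m x y) = 0.
Proof.
  intro H. unfold Psi1_den, Psi1_x, Psi1_y, formA1, formA0, map_x, map_y in *.
  unfold map_den in *. unfold alpha1, beta1, gamma1, delta1, eps1, mu1 in *. field. exact H.
Qed.

Lemma sqlem p q r s : q <> 0 -> s <> 0 -> p*q + r*s = 0 -> (p/s)^2 = (r/q)^2.
Proof.
  intros Hq Hs H. assert (E: p*q = -(r*s)) by lra.
  replace (p/s) with ((p*q)/(s*q)) by (field; auto). rewrite E. field; auto.
Qed.

Lemma dlem u F0 F0b : F0 <> 0 -> F0b <> 0 -> u * F0 = F0b -> u = / F0 / / F0b.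
Proof.
  intros H1 H2 H. replace u with (u*F0/F0) by (field; auto). rewrite H. field; auto.
Qed.

Theorem corollary4 (a b g d e m : R) :
  (* Psi preserves I^2 *)
  (forall x y : R,
     Psi_den a b g d e m x y <> 0 ->
     formA1 a b g d e m x y <> 0 ->
     formA1 a b g d e m (Psi_x a b g d e m x y) (Psi_y a b g d e m x y) <> 0 ->
     (Iinv a b g d e m (Psi_x a b g d e m x y) (Psi_y a b g d e m x y)) ^ 2
       = (Iinv a b g d e m x y) ^ 2) /\
  (* Psi_1 preserves I^2 *)
  (forall x y : R,
     Psi1_den a b g d e m x y <> 0 ->
     formA1 a b g d e m x y <> 0 ->
     formA1 a b g d e m (Psi1_x a b g d e m x y) (Psi1_y a b g d e m x y) <> 0 ->
     (Iinv a b g d e m (Psi1_x a b g d e m x y) (Psi1_y a b g d e m x y)) ^ 2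
       = (Iinv a b g d e m x y) ^ 2) /\
  (* Psi is anti measure-preserving with density m = (X^T A0 Y)^(-1) *)
  (forall x y : R,
     Psi_den a b g d e m x y <> 0 ->
     formA0 a b g d e m x y <> 0 ->
     formA0 a b g d e m (Psi_x a b g d e m x y) (Psi_y a b g d e m x y) <> 0 ->
     anti_measure_preserving_at (Psi_x a b g d e m) (Psi_y a b g d e m)
       (dens a b g d e m) x y) /\
  (* Psi_1 is measure-preserving with density m = (X^T A0 Y)^(-1) *)
  (forall x y : R,
     Psi1_den a b g d e m x y <> 0 ->
     formA0 a b g d e m x y <> 0 ->
     formA0 a b g d e m (Psi1_x a b g d e m x y) (Psi1_y a b g d e m x y) <> 0 ->
     measure_preserving_at (Psi1_x a b g d e m) (Psi1_y a b g d e m)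
       (dens a b g d e m) x y).
Proof.
  split; [|split; [|split]]; intros x y Hd H1 H2.
  - apply (sqlem _ _ _ _ H1 H2 (inv0 a b g d e m x y Hd)).
  - apply (sqlem _ _ _ _ H1 H2 (inv1 a b g d e m x y Hd)).
  - destruct (jac a b g d e m x y Hd) as [Hp Hj]. split; [exact Hp|].
    unfold Psi_x, Psi_y in *. rewrite Hj. unfold dens. f_equal. apply dlem; auto.
    pose proof (key0 a b g d e m x y Hd) as K. unfold Psi_x, Psi_y in *. lra.
  - destruct (jac (alpha1 a b g d e m) (beta1 a b g d e m) (gamma1 a b g d e m)
       (delta1 a b g d e m) (eps1 a b g d e m) (mu1 a b g d e m) x y Hd) as [Hp Hj].
    split; [exact Hp|].
    unfold Psi1_x, Psi1_y in *. rewrite Hj. unfold dens. apply dlem; auto.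
    apply (key1 a b g d e m x y Hd).
Qed.
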